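(* In the game described in the context, suppose the SSP Game Model Assumption holds, and let $\mu\in\Pi_1^{SD}$, $\nu\in\Pi_2^{SD}$. Then: (i) if there exists $x\in\mathbb{R}^n$ with $x\ge T_\mu x$, then $\mu$ is essentially proper; (ii) if there exists $x\in\mathbb{R}^n$ with $x\le\tilde T_\nu x$, then $\nu$ is essentially proper. Moreover, the policies $\bar\mu$ and $\bar\nu$ from parts (i) and (ii) of the SSP Game Model Assumption are essentially proper (so each player has at least one essentially proper stationary deterministic policy).
   Context: Game model. $S=\{1,\dots,n\}$, $S_o=S\cup\{0\}$, $0$ an absorbing cost-free termination state. At $i\in S$ player I picks $\bar u\in\bar U(i)$, player II picks $\bar v\in\bar V(i)$ ($\bar U(i),\bar V(i)$ compact subsets of complete separable metric spaces); expected cost $c_i(\bar u,\bar v)\in\mathbb{R}$ to player I, transition to $j\in S_o$ w.p. $p_{ij}(\bar u,\bar v)$. Standing assumption: $p_{ij}$ continuous on $\bar U(i)\times\bar V(i)$, and $c_i$ lower semicontinuous in $\bar u$ for fixed $\bar v$, upper semicontinuous in $\bar v$ for fixed $\bar u$. $x_i(\pi_1,\pi_2)=\liminf_{t\to\infty}E_{\pi_1\pi_2}[\sum_{k=0}^tc_{i_k}(\bar u_k,\bar v_k)\mid i_0=i]$. $\Pi_1^{SD}=\{\mu:\mu(i)\in\bar U(i)\}$, $\Pi_2^{SD}=\{\nu:\nu(i)\in\bar V(i)\}$; $T_{\mu\nu}x=c(\mu,\nu)+P(\mu,\nu)x$ with $c(\mu,\nu)_i=c_i(\mu(i),\nu(i))$,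 $P(\mu,\nu)_{ij}=p_{ij}(\mu(i),\nu(i))$, $i,j\in S$; $T_\mu x=\sup_{\nu\in\Pi_2^{SD}}T_{\mu\nu}x$, $\tilde T_\nu x=\inf_{\mu\in\Pi_1^{SD}}T_{\mu\nu}x$ (componentwise). Prolonging pair: for some initial state the termination state is with positive probability never reached; otherwise non-prolonging. SSP Game Model Assumption: (i) there is $\bar\mu\in\Pi_1^{SD}$ with $x_i(\bar\mu,\nu)<+\infty$ for all $\nu\in\Pi_2^{SD}$ and all $i$; (ii) there is $\bar\nu\in\Pi_2^{SD}$ with $x_i(\mu,\bar\nu)>-\infty$ for all $\mu\in\Pi_1^{SD}$ and all $i$; (iii) every prolonging pair $(\mu,\nu)\in\Pi_1^{SD}\times\Pi_2^{SD}$ has $x_i(\mu,\nu)\in\{+\infty,-\infty\}$ for some $i$. Essentially proper: $\mu$ is essentially proper if some $\nu$ makes $(\mu,\nu)$ non-prolonging and every $\nu$ with $(\mu,\nu)$ prolonging has $x_i(\mu,\nu)=-\infty$ for some $i$; $\nu$ is essentially proper if some $\mu$ makes $(\mu,\nu)$ non-prolonging and every $\mu$ with $(\mu,\nu)$ prolonging has $x_i(\mu,\nu)=+\infty$ for some $i$. *)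

(* Defs.v *)
From HB Require Import structures.
From mathcomp Require Import all_boot all_order all_algebra.
From mathcomp Require Import all_classical all_reals all_analysis.
Set Implicit Arguments. Unset Strict Implicit. Unset Printing Implicit Defensive.
Import Order.TTheory GRing.Theory Num.Theory.
Import numFieldNormedType.Exports.
Local Open Scope classical_set_scope.
Local Open Scope ring_scope.

(* The state space S = {1,...,n} is represented by 'I_n ; the termination
   state 0 is represented by [None : option 'I_n]. *)

Definition separable_space (T : topologicalType) :=
  exists D : set T, countable D /\ dense D.

Definition lsc_on (T : topologicalType) (R : realType) (A : set T) (f : T -> R) :=
  forall x, A x -> forall a : R, a < f x ->
    \forall y \near x, A y -> a < f y.

Definition usc_on (T : topologicalType) (R : realType) (A : set T) (f : T -> R) :=
  forall x, A x -> forall a : R, f x < a ->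
    \forall y \near x, A y -> f y < a.

Record game (R : realType) (U V : Type) (n : nat) := Game {
  Ubar : 'I_n -> set U;
  Vbar : 'I_n -> set V;
  cost : 'I_n -> U -> V -> R;
  prob : 'I_n -> option 'I_n -> U -> V -> R }.

Section Game.
Variables (R : realType) (U V : Type) (n : nat) (G : game R U V n).
Local Notation Ubar := (Ubar G).
Local Notation Vbar := (Vbar G).
Local Notation c := (cost G).
Local Notation p := (prob G).

Definition Pi1SD (mu : 'I_n -> U) := forall i, Ubar i (mu i).
Definition Pi2SD (nu : 'I_n -> V) := forall i, Vbar i (nu i).

Definition cvec (mu : 'I_n -> U) (nu : 'I_n -> V) : 'cV[R]_n :=
  \col_i c i (mu i) (nu i).

Definition Pmx (mu : 'I_n -> U) (nu : 'I_n -> V) : 'M[R]_n :=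
  \matrix_(i, j) p i (Some j) (mu i) (nu i).

Definition Tmunu mu nu (x : 'cV[R]_n) : 'cV[R]_n :=
  cvec mu nu + Pmx mu nu *m x.

Definition Tmu mu (x : 'cV[R]_n) (i : 'I_n) : \bar R :=
  ereal_sup [set ((Tmunu mu nu x) i 0)%:E | nu in Pi2SD].

Definition Ttnu nu (x : 'cV[R]_n) (i : 'I_n) : \bar R :=
  ereal_inf [set ((Tmunu mu nu x) i 0)%:E | mu in Pi1SD].

(* x_i(mu,nu) = liminf_t E[sum_{k=0}^t c_{i_k} | i_0 = i]
             = liminf_t (sum_{k=0}^t P^k c)_i   for stationary (mu,nu) *)
Definition xcost mu nu (i : 'I_n) : \bar R :=
  limn_einf (fun t : nat =>
    (\sum_(k < t.+1) (Pmx mu nu ^+ k *m cvec mu nu) i 0)%:E).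

(* probability, starting at i, that termination has not occurred by step k *)
Definition not_term_prob mu nu (k : nat) (i : 'I_n) : R :=
  (Pmx mu nu ^+ k *m (const_mx 1 : 'cV[R]_n)) i 0.

Definition never_term_prob mu nu (i : 'I_n) : R :=
  lim (not_term_prob mu nu k i @[k --> \oo]).

Definition prolonging mu nu := exists i, 0 < never_term_prob mu nu i.

Definition ess_proper1 mu :=
  (exists nu, Pi2SD nu /\ ~ prolonging mu nu) /\
  (forall nu, Pi2SD nu -> prolonging mu nu -> exists i, xcost mu nu i = -oo%E).

Definition ess_proper2 nu :=
  (exists mu, Pi1SD mu /\ ~ prolonging mu nu) /\
  (forall mu, Pi1SD mu -> prolonging mu nu -> exists i, xcost mu nu i = +oo%E).

Definition SSP_assumption :=
  [/\ (exists mubar, Pi1SD mubar /\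
         forall nu, Pi2SD nu -> forall i, (xcost mubar nu i < +oo)%E),
      (exists nubar, Pi2SD nubar /\
         forall mu, Pi1SD mu -> forall i, (-oo < xcost mu nubar i)%E) &
      (forall mu nu, Pi1SD mu -> Pi2SD nu -> prolonging mu nu ->
         exists i, xcost mu nu i = +oo%E \/ xcost mu nu i = -oo%E)].

End Game.

(* Main.v *)
Require Import Defs.
From HB Require Import structures.
From mathcomp Require Import all_boot all_order all_algebra.
From mathcomp Require Import all_classical all_reals all_analysis.
Import Order.TTheory GRing.Theory Num.Theory.
Import numFieldNormedType.Exports.
Local Open Scope classical_set_scope.
Local Open Scope ring_scope.


Section Mx.
Variables (R : realType) (n : nat) (P : 'M[R]_n).
Hypothesis P_ge0 : forall i j, 0 <= P i j.
Hypothesis P_row : forall i, \sum_j P i j <= 1.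

Lemma mulmx_mono (y z : 'cV[R]_n) : (forall j, y j 0 <= z j 0) ->
  forall i, (P *m y) i 0 <= (P *m z) i 0.
Proof.
move=> yz i; rewrite !mxE; apply: ler_sum => j _.
exact: ler_wpM2l.
Qed.

Lemma powmx_S t (y : 'cV[R]_n) : P ^+ t.+1 *m y = P *m (P ^+ t *m y).
Proof. by rewrite exprS -mulmxE mulmxA. Qed.

Lemma powmx_mono t (y z : 'cV[R]_n) : (forall j, y j 0 <= z j 0) ->
  forall i, (P ^+ t *m y) i 0 <= (P ^+ t *m z) i 0.
Proof.
elim: t => [|t IH] yz i; first by rewrite expr0 !mul1mx.
by rewrite !powmx_S; apply: mulmx_mono => j; apply: IH.
Qed.

Lemma mulmx_bound (y : 'cV[R]_n) M : 0 <= M -> (forall j, `|y j 0| <= M) ->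
  forall i, `|(P *m y) i 0| <= M.
Proof.
move=> M0 yM i; rewrite mxE.
apply: (le_trans (ler_norm_sum _ _ _)).
apply: (@le_trans _ _ (\sum_j P i j * M)).
  apply: ler_sum => j _; rewrite normrM ger0_norm //.
  exact: ler_wpM2l.
rewrite -mulr_suml -[leRHS]mul1r; exact: ler_wpM2r.
Qed.

Lemma powmx_bound t (y : 'cV[R]_n) M : 0 <= M -> (forall j, `|y j 0| <= M) ->
  forall i, `|(P ^+ t *m y) i 0| <= M.
Proof.
move=> M0; elim: t => [|t IH] yM i; first by rewrite expr0 mul1mx.
by rewrite powmx_S; apply: mulmx_bound => // j; apply: IH.
Qed.

Lemma iter_le (c x : 'cV[R]_n) : (forall i, (c + P *m x) i 0 <= x i 0) ->
  forall t i, \sum_(k < t) (P ^+ k *m c) i 0 + (P ^+ t *m x) i 0 <= x i 0.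
Proof.
move=> hx; elim=> [|t IH] i; first by rewrite big_ord0 expr0 mul1mx add0r.
rewrite big_ord_recr /= -addrA; apply: le_trans (IH i); rewrite lerD2l.
have e : P ^+ t *m P = P ^+ t.+1 by rewrite exprSr mulmxE.
have := @powmx_mono t _ _ hx i; rewrite mulmxDr mulmxA e mxE.
by [].
Qed.

Lemma iter_ge (c x : 'cV[R]_n) : (forall i, x i 0 <= (c + P *m x) i 0) ->
  forall t i, x i 0 <= \sum_(k < t) (P ^+ k *m c) i 0 + (P ^+ t *m x) i 0.
Proof.
move=> hx; elim=> [|t IH] i; first by rewrite big_ord0 expr0 mul1mx add0r.
rewrite big_ord_recr /= -addrA; apply: le_trans (IH i) _; rewrite lerD2l.
have e : P ^+ t *m P = P ^+ t.+1 by rewrite exprSr mulmxE.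
have := @powmx_mono t _ _ hx i; rewrite mulmxDr mulmxA e [X in _ <= X]mxE.
by [].
Qed.

Definition nrm (x : 'cV[R]_n) := \sum_j `|x j 0|.

Lemma nrm_ge0 (x : 'cV[R]_n) : 0 <= nrm x.
Proof. by apply: sumr_ge0 => j _. Qed.

Lemma nrm_le (x : 'cV[R]_n) j : `|x j 0| <= nrm x.
Proof.
rewrite /nrm (bigD1 j) //= lerDl; by apply: sumr_ge0 => k _.
Qed.

Lemma partial_le (c x : 'cV[R]_n) : (forall i, (c + P *m x) i 0 <= x i 0) ->
  forall t i, \sum_(k < t.+1) (P ^+ k *m c) i 0 <= x i 0 + nrm x.
Proof.
move=> hx t i; have := @iter_le _ _ hx t.+1 i.
have := @powmx_bound t.+1 x _ (nrm_ge0 x) (@nrm_le x) i.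
rewrite ler_norml => /andP[h1 h2] h3.
rewrite -lerBrDr in h3; apply: le_trans h3 _; rewrite lerD2l lerNl; exact: h1.
Qed.

Lemma partial_ge (c x : 'cV[R]_n) : (forall i, x i 0 <= (c + P *m x) i 0) ->
  forall t i, x i 0 - nrm x <= \sum_(k < t.+1) (P ^+ k *m c) i 0.
Proof.
move=> hx t i; have := @iter_ge _ _ hx t.+1 i.
have := @powmx_bound t.+1 x _ (nrm_ge0 x) (@nrm_le x) i.
rewrite ler_norml => /andP[h1 h2] h3.
rewrite -lerBlDr in h3; apply: le_trans h3; rewrite lerD2l lerN2; exact: h2.
Qed.
End Mx.
Arguments nrm {R n}.

Section GameLemmas.
Variables (R : realType) (U V : Type) (n : nat) (G : game R U V n).
Hypothesis p_ge0 : forall i j u v, Ubar G i u -> Vbar G i v -> 0 <= prob G i j u v.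
Hypothesis p_sum1 : forall i u v, Ubar G i u -> Vbar G i v ->
     prob G i None u v + \sum_(j < n) prob G i (Some j) u v = 1.

Lemma P_ge0 mu nu : Pi1SD G mu -> Pi2SD G nu -> forall i j, 0 <= Pmx G mu nu i j.
Proof. by move=> hmu hnu i j; rewrite mxE; apply: p_ge0. Qed.

Lemma P_row mu nu : Pi1SD G mu -> Pi2SD G nu -> forall i, \sum_j Pmx G mu nu i j <= 1.
Proof.
move=> hmu hnu i.
rewrite (eq_bigr (fun j => prob G i (Some j) (mu i) (nu i))) => [|j _]; last by rewrite mxE.
have h1 := p_sum1 i _ _ (hmu i) (hnu i).
have h0 := p_ge0 i None _ _ (hmu i) (hnu i).
by rewrite -h1 lerDr.
Qed.

Lemma xcost_up mu nu (x : 'cV[R]_n) : Pi1SD G mu -> Pi2SD G nu ->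
  (forall i, (Tmunu G mu nu x) i 0 <= x i 0) -> forall i, (xcost G mu nu i < +oo)%E.
Proof.
move=> hmu hnu hx i.
suff h : (xcost G mu nu i <= (x i 0 + nrm x)%:E)%E by exact: (le_lt_trans h (ltry _)).
rewrite /xcost limn_einf_lim; apply: lime_le; first exact: is_cvg_einfs.
apply: nearW => m; rewrite /einfs /=.
apply: le_trans; first by apply: ereal_inf_lbound; exists m => /=.
rewrite lee_fin; apply: partial_le => //.
- exact: P_ge0.
- exact: P_row.
Qed.

Lemma xcost_lo mu nu (x : 'cV[R]_n) : Pi1SD G mu -> Pi2SD G nu ->
  (forall i, x i 0 <= (Tmunu G mu nu x) i 0) -> forall i, (-oo < xcost G mu nu i)%E.
Proof.
move=> hmu hnu hx i.
suff h : ((x i 0 - nrm x)%:E <= xcost G mu nu i)%E by exact: (lt_le_trans (ltNyr _) h).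
rewrite /xcost limn_einf_lim; apply: lime_ge; first exact: is_cvg_einfs.
apply: nearW => m; rewrite /einfs /=.
apply: le_ereal_inf_tmp => _ [k /= _ <-].
rewrite lee_fin; apply: partial_ge => //.
- exact: P_ge0.
- exact: P_row.
Qed.

Lemma ess1_of mu : SSP_assumption G -> Pi1SD G mu ->
  (forall nu, Pi2SD G nu -> forall i, (xcost G mu nu i < +oo)%E) -> ess_proper1 G mu.
Proof.
case=> _ [nb [hnb nbfin]] h3 hmu fin; split.
  exists nb; split => // prol.
  have [i [e|e]] := h3 mu nb hmu hnb prol.
    by have := fin nb hnb i; rewrite e ltxx.
  by have := nbfin mu hmu i; rewrite e ltxx.
move=> nu hnu prol; have [i [e|e]] := h3 mu nu hmu hnu prol; last by exists i.
by have := fin nu hnu i; rewrite e ltxx.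
Qed.

Lemma ess2_of nu : SSP_assumption G -> Pi2SD G nu ->
  (forall mu, Pi1SD G mu -> forall i, (-oo < xcost G mu nu i)%E) -> ess_proper2 G nu.
Proof.
case=> [[mb [hmb mbfin]] _ h3] hnu fin; split.
  exists mb; split => // prol.
  have [i [e|e]] := h3 mb nu hmb hnu prol.
    by have := mbfin nu hnu i; rewrite e ltxx.
  by have := fin mb hmb i; rewrite e ltxx.
move=> mu hmu prol; have [i [e|e]] := h3 mu nu hmu hnu prol; first by exists i.
by have := fin mu hmu i; rewrite e ltxx.
Qed.
End GameLemmas.

Theorem lemma2p3 (R : realType) (U V : completePseudoMetricType R) (n : nat)
  (G : game R U V n)
  (* action spaces: complete separable metric spaces, compact action sets *)
  (hU : hausdorff_space U) (hV : hausdorff_space V)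
  (sU : separable_space U) (sV : separable_space V)
  (cU : forall i, compact (Ubar G i)) (cV : forall i, compact (Vbar G i))
  (* transition probabilities *)
  (p_ge0 : forall i j u v, Ubar G i u -> Vbar G i v -> 0 <= prob G i j u v)
  (p_sum1 : forall i u v, Ubar G i u -> Vbar G i v ->
     prob G i None u v + \sum_(j < n) prob G i (Some j) u v = 1)
  (p_cont : forall i j,
     {within Ubar G i `*` Vbar G i, continuous (fun uv : U * V => prob G i j uv.1 uv.2)})
  (* semicontinuity of costs *)
  (c_lsc : forall i v, Vbar G i v -> lsc_on (Ubar G i) (fun u => cost G i u v))
  (c_usc : forall i u, Ubar G i u -> usc_on (Vbar G i) (fun v => cost G i u v))
  (hSSP : SSP_assumption G) :
  [/\ forall mu, Pi1SD G mu ->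
        (exists x : 'cV[R]_n, forall i, (Tmu G mu x i <= (x i 0)%:E)%E) ->
        ess_proper1 G mu,
      forall nu, Pi2SD G nu ->
        (exists x : 'cV[R]_n, forall i, ((x i 0)%:E <= Ttnu G nu x i)%E) ->
        ess_proper2 G nu,
      forall mubar, Pi1SD G mubar ->
        (forall nu, Pi2SD G nu -> forall i, (xcost G mubar nu i < +oo)%E) ->
        ess_proper1 G mubar &
      forall nubar, Pi2SD G nubar ->
        (forall mu, Pi1SD G mu -> forall i, (-oo < xcost G mu nubar i)%E) ->
        ess_proper2 G nubar].
Proof.
split.
- move=> mu hmu [x hx]; apply: (@ess1_of _ _ _ _ G _ hSSP hmu) => nu hnu.
  apply: (@xcost_up _ _ _ _ G p_ge0 p_sum1 mu nu x hmu hnu) => i.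
  have h : ((Tmunu G mu nu x i 0)%:E <= Tmu G mu x i)%E.
    by apply: ereal_sup_ubound; exists nu.
  by rewrite -lee_fin; exact: (le_trans h (hx i)).
- move=> nu hnu [x hx]; apply: (@ess2_of _ _ _ _ G _ hSSP hnu) => mu hmu.
  apply: (@xcost_lo _ _ _ _ G p_ge0 p_sum1 mu nu x hmu hnu) => i.
  have h : (Ttnu G nu x i <= (Tmunu G mu nu x i 0)%:E)%E.
    by apply: ereal_inf_lbound; exists mu.
  by rewrite -lee_fin; exact: (le_trans (hx i) h).
- by move=> mb hmb fin; apply: (@ess1_of _ _ _ _ G _ hSSP hmb fin).
- by move=> nb hnb fin; apply: (@ess2_of _ _ _ _ G _ hSSP hnb fin).
Qed.
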